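(* Let $d\geq 2$ and let $\rho^s$ be a state on $H_d=\mathbb{C}^d$ of rank two whose diagonal (in the computational basis) is supported on two indices, i.e. there are $k\neq l$ with $\rho^s_{kk}>0$, $\rho^s_{ll}>0$ and $\rho^s_{kk}+\rho^s_{ll}=1$. Then there exists an incoherent operation $\Lambda$ on $H_d\otimes H_d$ such that $\Lambda(\rho^s\otimes|0\rangle\langle 0|)$ is Bell-nonlocal if and only if $\rho^s$ is coherent.
   Context: Coherence is taken with respect to the computational basis of $H_d$ and the product computational basis of $H_d\otimes H_d$. A state is incoherent if it is diagonal in this basis, and coherent otherwise. An incoherent operation is a completely positive trace-preserving map $\Lambda(\rho)=\sum_j K_j\rho K_j^\dagger$ with $K_j\mathcal{I}K_j^\dagger\subseteq\mathcal{I}$ for all $j$, where $\mathcal{I}$ is the set of incoherent states. A state is Bell-nonlocal if it violates some Bell inequality, i.e. it does not admit a local hidden variable model. *)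

(* Defs.v *)
From HB Require Import structures.
From mathcomp Require Import all_boot all_order all_algebra.
From mathcomp Require Import complex mxtens.
From mathcomp Require Import reals.

Set Implicit Arguments.
Unset Strict Implicit.
Unset Printing Implicit Defensive.

Import Order.TTheory GRing.Theory Num.Theory.
Local Open Scope ring_scope.
Local Open Scope complex_scope.

Section QuantumDefs.
Variable R : realType.
Local Notation C := (R[i]).

Definition adjoint m n (A : 'M[C]_(m, n)) : 'M[C]_(n, m) := map_mx (@Num.conj C) A^T.

Definition psd n (A : 'M[C]_n) : Prop :=
  A = adjoint A /\ forall v : 'cV[C]_n, 0 <= (adjoint v *m A *m v) 0 0.

Definition is_state n (rho : 'M[C]_n) : Prop := psd rho /\ \tr rho = 1.

Definition incoherent_state n (rho : 'M[C]_n) : Prop :=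
  is_state rho /\ is_diag_mx rho.

Definition coherent n (rho : 'M[C]_n) : Prop := ~~ is_diag_mx rho.

Definition apply_kraus n m (K : 'I_m -> 'M[C]_n) (rho : 'M[C]_n) : 'M[C]_n :=
  \sum_(j < m) (K j *m rho *m adjoint (K j)).

(* incoherent operation: CPTP map with Kraus operators K_j satisfying
   K_j I K_j^dagger \subseteq I (up to normalisation, i.e. each K_j maps
   incoherent states to diagonal operators). *)
Definition incoherent_operation n m (K : 'I_m -> 'M[C]_n) : Prop :=
  \sum_(j < m) (adjoint (K j) *m K j) = 1%:M /\
  forall (j : 'I_m) (sigma : 'M[C]_n),
    incoherent_state sigma -> is_diag_mx (K j *m sigma *m adjoint (K j)).

Definition povm n o (M : 'I_o -> 'M[C]_n) : Prop :=
  (forall a, psd (M a)) /\ \sum_(a < o) M a = 1%:M.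

(* A bipartite state on C^dA (x) C^dB (indices 'I_(dA*dB), product basis via
   mxtens) admits a local hidden variable model: for every finite choice of
   measurement settings and POVMs, the correlations are given by a
   (finite) local hidden variable model. *)
Definition bell_local dA dB (rho : 'M[C]_(dA * dB)) : Prop :=
  forall (mA mB oA oB : nat)
         (MA : 'I_mA -> 'I_oA -> 'M[C]_dA) (MB : 'I_mB -> 'I_oB -> 'M[C]_dB),
    (forall x, povm (MA x)) -> (forall y, povm (MB y)) ->
    exists (L : nat) (q : 'I_L -> R)
           (pA : 'I_L -> 'I_mA -> 'I_oA -> R) (pB : 'I_L -> 'I_mB -> 'I_oB -> R),
      [/\ (forall l, 0 <= q l) /\ \sum_(l < L) q l = 1,
          (forall l x a, 0 <= pA l x a) /\ (forall l x, \sum_(a < oA) pA l x a = 1),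
          (forall l y b, 0 <= pB l y b) /\ (forall l y, \sum_(b < oB) pB l y b = 1) &
          forall x y a b,
            \tr (rho *m (MA x a *t MB y b)) =
            (\sum_(l < L) q l * pA l x a * pB l y b)%:C].

Definition bell_nonlocal dA dB (rho : 'M[C]_(dA * dB)) : Prop :=
  ~ bell_local rho.

Definition ket0bra d : 'M[C]_d :=
  \matrix_(i, j) ((nat_of_ord i == 0%N) && (nat_of_ord j == 0%N))%:R.

End QuantumDefs.

(* Main.v *)
Require Import Defs.
From HB Require Import structures.
From mathcomp Require Import all_boot all_order all_algebra.
From mathcomp Require Import complex mxtens.
From mathcomp Require Import reals.
From mathcomp Require Import ring lra.
From mathcomp Require Import fingroup perm.
Import Order.TTheory GRing.Theory Num.Theory.
Local Open Scope ring_scope.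
Local Open Scope complex_scope.
Set Warnings "-notation-overridden,-ambiguous-paths".
Set Implicit Arguments. Unset Strict Implicit. Unset Printing Implicit Defensive.
Section Main.
Variable R : realType.
Local Notation C := (R[i]).
Local Notation cj := (@Num.conj C).

Lemma adjE m n (A : 'M[C]_(m,n)) i j : adjoint A i j = (cj (A j i)).
Proof. by rewrite !mxE. Qed.

Lemma adj_mul m n p (A : 'M[C]_(m,n)) (B : 'M[C]_(n,p)) :
  adjoint (A *m B) = adjoint B *m adjoint A.
Proof. by rewrite /adjoint trmx_mul map_mxM. Qed.

Lemma adjK m n (A : 'M[C]_(m,n)) : adjoint (adjoint A) = A.
Proof. by apply/matrixP=> i j; rewrite !mxE conjCK. Qed.

Lemma psdD n (A B : 'M[C]_n) : psd A -> psd B -> psd (A + B).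
Proof.
move=> [hA fA] [hB fB]; split.
  by rewrite {1}hA {1}hB; apply/matrixP=> i j; rewrite !mxE rmorphD.
move=> v; rewrite mulmxDr mulmxDl mxE; exact: addr_ge0.
Qed.

Lemma psd0 n : psd (0 : 'M[C]_n).
Proof.
split; first by apply/matrixP=> i j; rewrite !mxE conjC0.
by move=> v; rewrite mulmx0 mul0mx mxE.
Qed.

Lemma psd_sum n m (F : 'I_m -> 'M[C]_n) : (forall j, psd (F j)) -> psd (\sum_j F j).
Proof.
move=> H; apply: (big_ind (fun M => psd M)) => //; [exact: psd0| exact: psdD].
Qed.

Lemma psd_conj n p (K : 'M[C]_(p,n)) (A : 'M[C]_n) : psd A -> psd (K *m A *m adjoint K).
Proof.
move=> [hA fA]; split.
  by rewrite !adj_mul adjK -hA mulmxA.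
move=> v; have := fA (adjoint K *m v).
by rewrite adj_mul adjK !mulmxA.
Qed.

Lemma form_delta n (A : 'M[C]_n) i j :
  (adjoint (delta_mx i 0 : 'M[C]_(n,1)) *m A *m (delta_mx j 0 : 'M[C]_(n,1))) 0 0 = A i j.
Proof.
have -> : adjoint (delta_mx i 0 : 'M[C]_(n,1)) = delta_mx 0 i.
  by apply/matrixP=> a b; rewrite !mxE; case: (_ == _); case: (_ == _); rewrite /= ?conjC0 ?conjC1.
by rewrite -rowE -colE !mxE.
Qed.

Lemma form_deltaM n (A : 'M[C]_n) i j :
  adjoint (delta_mx i 0 : 'M[C]_(n,1)) *m A *m (delta_mx j 0 : 'M[C]_(n,1)) = (A i j)%:M.
Proof.
apply/matrixP=> a b; rewrite !ord1 form_delta; by rewrite !mxE eqxx mulr1n.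
Qed.

Lemma psd_diag_ge0 n (A : 'M[C]_n) i : psd A -> 0 <= A i i.
Proof. by move=> [_ fA]; have := fA (delta_mx i 0); rewrite form_delta. Qed.

Lemma psd_herm n (A : 'M[C]_n) i j : psd A -> A j i = (cj (A i j)).
Proof. by move=> [hA _]; rewrite {1}hA mxE mxE. Qed.

Lemma adjD m n (A B : 'M[C]_(m,n)) : adjoint (A + B) = adjoint A + adjoint B.
Proof. by apply/matrixP=> i j; rewrite !mxE rmorphD. Qed.

Lemma adjZ m n (x : C) (A : 'M[C]_(m,n)) : adjoint (x *: A) = (cj x) *: adjoint A.
Proof. by apply/matrixP=> i j; rewrite !mxE rmorphM. Qed.

Lemma psd_cs0 n (A : 'M[C]_n) i j : psd A -> A i i = 0 -> A i j = 0.
Proof.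
move=> pA Aii; have [<-//|ij] := eqVneq i j.
apply/eqP; apply/negP => mnz.
set m := A i j in mnz.
have Aji : A j i = (cj m) by rewrite (psd_herm i j pA).
have Ajj : (cj (A j j)) = A j j by rewrite -(psd_herm j j pA).
have mn0 : m != 0 by apply/negP.
have Nnz : m * (cj m) != 0 by rewrite mulf_neq0 // conjC_eq0.
set u := (A j j + 1) / (2%:R * (m * (cj m))).
have uc : (cj u) = u.
  have c2 : cj 2%:R = 2%:R by exact: conjC_nat.
  by rewrite /u fmorph_div rmorphD rmorph1 !rmorphM /= rmorph_nat conjCK Ajj [cj m * m]mulrC.
set x := - (u * m).
have := (proj2 pA) (x *: delta_mx i 0 + delta_mx j 0).
rewrite adjD adjZ !mulmxDl !mulmxDr -!scalemxAl -!scalemxAr !form_deltaM !mxE !eqxx !mulr1n Aii Aji -/m.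
have -> : (cj x) * (x * 0) + (cj x) * m + (x * (cj m) + A j j) = -1.
  have e : u * (m * (cj m)) = (A j j + 1) / 2%:R.
    by rewrite /u; field; rewrite /= ?conjC_eq0 ?mn0 ?pnatr_eq0.
  rewrite /x rmorphN rmorphM /= uc.
  have -> : - (u * cj m) * (- (u * m) * 0) + - (u * cj m) * m + (- (u * m) * cj m + A j j)
     = -(2%:R) * (u * (m * cj m)) + A j j by ring.
  rewrite e; field; rewrite ?pnatr_eq0 //.
by rewrite ler0N1.
Qed.

Definition blk n (k l : 'I_n) (p q r s e : C) : 'M[C]_n :=
  \matrix_(i, j) if i == k then (if j == k then p else if j == l then q else 0)
                 else if i == l then (if j == k then r else if j == l then s else 0)
                 else if i == j then e else 0.

Lemma blk_mul n (k l : 'I_n) p q r s e m (Y : 'M[C]_(n,m)) i j : k != l ->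
  (blk k l p q r s e *m Y) i j =
  if i == k then p * Y k j + q * Y l j
  else if i == l then r * Y k j + s * Y l j else e * Y i j.
Proof.
move=> kl; rewrite mxE (bigD1 k) //= (bigD1 l) /=; last by rewrite eq_sym.
have lk : (l == k) = false by apply/negbTE; rewrite eq_sym.
rewrite !mxE !eqxx lk ?(negbTE kl).
have [ik|ik] := eqVneq i k.
  rewrite big1 ?addr0 // => a /andP [ak al]; rewrite mxE ik eqxx (negbTE ak) (negbTE al) mul0r //.
have [il|il] := eqVneq i l.
  rewrite big1 ?addr0 // => a /andP [ak al]; rewrite mxE il lk eqxx (negbTE ak) (negbTE al) mul0r //.
rewrite !mul0r !add0r.
rewrite (bigD1 i) /=; last by rewrite ik il.
rewrite mxE (negbTE ik) (negbTE il) eqxx big1 ?addr0 // => a /andP [/andP [ak al] ai].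
by rewrite mxE (negbTE ik) (negbTE il) eq_sym (negbTE ai) mul0r.
Qed.

Lemma blkE n (k l : 'I_n) p q r s e : k != l ->
  [/\ blk k l p q r s e k k = p, blk k l p q r s e k l = q,
      blk k l p q r s e l k = r & blk k l p q r s e l l = s].
Proof.
move=> kl; have lk : (l == k) = false by apply/negbTE; rewrite eq_sym.
by rewrite !mxE !eqxx lk.
Qed.

Lemma blk_tr n (k l : 'I_n) p q r s (Y : 'M[C]_(n)) : k != l ->
  \tr (blk k l p q r s 0 *m Y) = p * Y k k + q * Y l k + r * Y k l + s * Y l l.
Proof.
move=> kl; have lk : (l == k) = false by apply/negbTE; rewrite eq_sym.
rewrite /mxtrace (bigD1 k) //= (bigD1 l) /=; last by rewrite eq_sym.
rewrite big1 ?addr0; last first.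
  by move=> a /andP [ak al]; rewrite blk_mul // (negbTE ak) (negbTE al) mul0r.
by rewrite !blk_mul // eqxx lk eqxx addrA.
Qed.

Lemma blk_add n (k l : 'I_n) p q r s e p' q' r' s' e' :
  blk k l p q r s e + blk k l p' q' r' s' e' = blk k l (p + p') (q + q') (r + r') (s + s') (e + e').
Proof.
apply/matrixP=> i j; rewrite !mxE.
by case: (i == k); case: (j == k); case: (j == l); case: (i == l); case: (i == j); rewrite ?addr0.
Qed.

Lemma blk1 n (k l : 'I_n) : k != l -> blk k l 1 0 0 1 1 = 1%:M.
Proof.
move=> kl; apply/matrixP=> i j; rewrite !mxE.
have lk : (l == k) = false by apply/negbTE; rewrite eq_sym.
case: (eqVneq i k) => [ik|ik].
  subst i; case: (eqVneq j k) => [jk|jk]; first by subst j; rewrite ?eqxx.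
  by rewrite ?(negbTE jk) eq_sym ?(negbTE jk); case: ifP.
case: (eqVneq i l) => [il|il].
  subst i; case: (eqVneq j k) => [jk|jk]; first by subst j; rewrite ?eqxx ?lk.
  case: (eqVneq j l) => [jl|jl]; first by subst j; rewrite ?eqxx.
  by rewrite ?(negbTE jk) ?(negbTE jl).
by rewrite ?(negbTE ik) ?(negbTE il); case: (i == j).
Qed.

Lemma psd_blk n (k l : 'I_n) p q r s e : k != l ->
  cj p = p -> cj s = s -> r = cj q -> cj e = e -> 0 <= e ->
  (forall x y : C, 0 <= cj x * (p * x + q * y) + cj y * (r * x + s * y)) ->
  psd (blk k l p q r s e).
Proof.
move=> kl hp hs hr he e0 H; have lk : (l == k) = false by apply/negbTE; rewrite eq_sym.
split.
  apply/matrixP=> i j; rewrite !mxE.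
  case: (eqVneq i k) => [?|ik]; [subst i|].
    case: (eqVneq j k) => [?|jk]; [by subst j; rewrite ?eqxx hp|].
    case: (eqVneq j l) => [?|jl]; [by subst j; rewrite ?eqxx ?lk hr conjCK|].
    by rewrite ?(negbTE jk) ?(negbTE jl) ?eqxx conjC0.
  case: (eqVneq i l) => [?|il]; [subst i|].
    case: (eqVneq j k) => [?|jk]; [by subst j; rewrite ?eqxx ?lk hr|].
    case: (eqVneq j l) => [?|jl]; [by subst j; rewrite ?eqxx ?lk hs|].
    by rewrite ?(negbTE jk) ?(negbTE jl) ?eqxx ?lk conjC0.
  case: (eqVneq j k) => [?|jk]; [by subst j; rewrite ?eqxx ?lk ?(negbTE ik) ?(negbTE il) ?conjC0|].
  case: (eqVneq j l) => [?|jl]; [by subst j; rewrite ?eqxx ?lk ?(negbTE ik) ?(negbTE il) ?conjC0|].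
  case: (eqVneq i j) => [?|ij]; [by subst j; rewrite ?eqxx he|].
  by rewrite ?(negbTE jk) ?(negbTE jl) ?conjC0.
move=> v; rewrite -mulmxA mxE (bigD1 k) //= (bigD1 l) /=; last by rewrite eq_sym.
rewrite !blk_mul // eqxx lk eqxx !mxE addrA.
apply: addr_ge0; first exact: H.
apply: sumr_ge0 => a /andP [ak al]; rewrite blk_mul // (negbTE ak) (negbTE al) mxE.
by rewrite mulrCA; apply: mulr_ge0 => //; rewrite !mxE mulrC; exact: mul_conjC_ge0.
Qed.

Lemma rho_blk d (rho : 'M[C]_d) (k l : 'I_d) : is_state rho -> k != l ->
  rho k k + rho l l = 1 -> rho = blk k l (rho k k) (rho k l) (rho l k) (rho l l) 0.
Proof.
move=> [pr tr] kl hkl.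
have z : forall i, i != k -> i != l -> rho i i = 0.
  move: tr; rewrite /mxtrace (bigD1 k) //= (bigD1 l) /=; last by rewrite eq_sym.
  rewrite addrA hkl => h1.
  have h0 : \sum_(i < d | (i != k) && (i != l)) rho i i = 0.
    by apply: (@addrI _ 1); rewrite h1 addr0.
  move=> i ik il; apply: (psumr_eq0P _ h0) => [a _|]; first exact: psd_diag_ge0.
  by rewrite ik il.
have zr : forall i j, i != k -> i != l -> rho i j = 0.
  by move=> i j ik il; apply: psd_cs0 => //; exact: z.
have zc : forall i j, j != k -> j != l -> rho i j = 0.
  by move=> i j jk jl; rewrite -[rho i j]conjCK -(psd_herm i j pr) zr // conjC0.
have lk : (l == k) = false by apply/negbTE; rewrite eq_sym.
apply/matrixP=> i j; rewrite !mxE.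
case: (eqVneq i k) => [?|ik]; [subst i|].
  case: (eqVneq j k) => [?|jk]; [by subst j|].
  case: (eqVneq j l) => [?|jl]; [by subst j; rewrite ?lk|].
  by rewrite zc.
case: (eqVneq i l) => [?|il]; [subst i|].
  case: (eqVneq j k) => [?|jk]; [by subst j|].
  case: (eqVneq j l) => [?|jl]; [by subst j|].
  by rewrite zc.
by rewrite zr //; case: ifP.
Qed.

Definition cnotf n (I : 'I_(n.+1 * n.+1)) : 'I_(n.+1 * n.+1) :=
  mxtens_index ((mxtens_unindex I).1, (mxtens_unindex I).2 - (mxtens_unindex I).1).

Lemma cnotf_inj n : injective (@cnotf n).
Proof.
move=> I J; rewrite /cnotf => /(can_inj (@mxtens_indexK _ _))/eqP; rewrite xpair_eqE => /andP [/eqP e1 /eqP e2].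
apply: (can_inj (@mxtens_unindexK _ _)).
have {}e2 : (mxtens_unindex I).2 = (mxtens_unindex J).2.
  by rewrite -(subrK (mxtens_unindex I).1 (mxtens_unindex I).2) e2 e1 subrK.
by case: (mxtens_unindex I) e1 e2 => a b; case: (mxtens_unindex J) => a' b' /= -> ->.
Qed.

Definition cnot n : 'S_(n.+1 * n.+1) := perm (@cnotf_inj n).

Lemma cnotE n i1 i2 : cnot n (mxtens_index (i1, i2)) = mxtens_index (i1, i2 - i1).
Proof. by rewrite permE /cnotf mxtens_indexK. Qed.

Definition KR n : 'I_1 -> 'M[C]_(n.+1 * n.+1) := fun _ => perm_mx (cnot n).

Lemma adj_perm m (s : 'S_m) : adjoint (perm_mx s : 'M[C]_m) = perm_mx s^-1.
Proof.
apply/matrixP=> i j; rewrite !mxE conjC_nat.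
have -> : (s^-1%g i == j) = (s j == i) by apply/idP/idP => /eqP <-; rewrite ?permK ?permKV.
done.
Qed.

Lemma conj_perm m (s : 'S_m) (X : 'M[C]_m) :
  perm_mx s *m X *m adjoint (perm_mx s) = \matrix_(i, j) X (s i) (s j).
Proof.
rewrite adj_perm -row_permE -col_permE.
by apply/matrixP=> i j; rewrite !mxE.
Qed.

Lemma KR_incoh n : incoherent_operation (KR n).
Proof.
split.
  by rewrite big_ord1 /KR adj_perm -perm_mxM mulVg perm_mx1.
move=> j sigma [_ /is_diag_mxP hd]; rewrite /KR conj_perm.
apply/is_diag_mxP => a b ab; rewrite mxE hd //.
have : a != b by apply: contra ab => /eqP ->.
by rewrite -(inj_eq (@perm_inj _ (cnot n))).
Qed.

Lemma KR_apply n (X : 'M[C]_(n.+1 * n.+1)) :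
  apply_kraus (KR n) X = \matrix_(i, j) X (cnot n i) (cnot n j).
Proof. by rewrite /apply_kraus big_ord1 conj_perm. Qed.

Lemma ord_sub0 n (x y : 'I_n.+1) : (nat_of_ord (x - y) == 0%N) = (x == y).
Proof.
by rewrite -[0%N]/(nat_of_ord (0 : 'I_n.+1)) -[_ == _]/((x - y) == 0) subr_eq0.
Qed.

Lemma out_blk n (k l : 'I_n.+1) a c c' b : k != l ->
  apply_kraus (KR n) (blk k l a c c' b 0 *t ket0bra R n.+1) =
  blk (mxtens_index (k, k)) (mxtens_index (l, l)) a c c' b 0.
Proof.
move=> kl; rewrite KR_apply; apply/matrixP => I J.
case: (mxtens_indexP I) => i1 i2; case: (mxtens_indexP J) => j1 j2.
rewrite mxE !cnotE tensmxE !mxE !ord_sub0.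
rewrite !(inj_eq (can_inj (@mxtens_indexK _ _))) !xpair_eqE.
case: (eqVneq i2 i1) => [?|ne]; [subst i2|].
  case: (eqVneq j2 j1) => [?|ne']; [subst j2|].
    rewrite !andbb mulr1.
    case: (i1 == k); case: (i1 == l); case: (j1 == k); case: (j1 == l) => //; by case: ifP.
  rewrite mulr0 !andbb.
  have -> : (j1 == k) && (j2 == k) = false.
    by apply/negP => /andP [/eqP a1 /eqP b1]; move: ne'; rewrite a1 b1 eqxx.
  have -> : (j1 == l) && (j2 == l) = false.
    by apply/negP => /andP [/eqP a1 /eqP b1]; move: ne'; rewrite a1 b1 eqxx.
  by case: (i1 == k); case: (i1 == l) => //; case: ifP.
rewrite mulr0.
have -> : (i1 == k) && (i2 == k) = false.
  by apply/negP => /andP [/eqP a1 /eqP b1]; move: ne; rewrite a1 b1 eqxx.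
have -> : (i1 == l) && (i2 == l) = false.
  by apply/negP => /andP [/eqP a1 /eqP b1]; move: ne; rewrite a1 b1 eqxx.
by case: ifP.
Qed.

Lemma tr_out n (k l : 'I_n.+1) a c c' b (A B : 'M[C]_n.+1) : k != l ->
  \tr (blk (mxtens_index (k, k)) (mxtens_index (l, l)) a c c' b 0 *m (A *t B)) =
  a * (A k k * B k k) + c * (A l k * B l k) + c' * (A k l * B k l) + b * (A l l * B l l).
Proof.
move=> kl; rewrite blk_tr ?tensmxE //.
by rewrite (inj_eq (can_inj (@mxtens_indexK _ _))) xpair_eqE negb_and kl.
Qed.

Lemma conj_h : cj (2%:R^-1) = 2%:R^-1 :> C.
Proof. by rewrite fmorphV /= conjC_nat. Qed.

Lemma h_ge0 : 0 <= 2%:R^-1 :> C.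
Proof. by rewrite invr_ge0 ler0n. Qed.

Lemma psdA n (k l : 'I_n) (w sg : C) : k != l -> cj sg = sg -> sg * sg = 1 ->
  0 <= 1 - w * cj w ->
  psd (blk k l 2%:R^-1 (sg * (2%:R^-1 * w)) (sg * (2%:R^-1 * cj w)) 2%:R^-1 2%:R^-1).
Proof.
move=> kl hs hs2 hw; apply: psd_blk => //; rewrite ?conj_h ?h_ge0 //.
  by rewrite !rmorphM /= hs conj_h.
move=> x y.
have -> : cj x * (2%:R^-1 * x + sg * (2%:R^-1 * w) * y) +
    cj y * (sg * (2%:R^-1 * cj w) * x + 2%:R^-1 * y) =
    2%:R^-1 * ((x + sg * w * y) * cj (x + sg * w * y) + (1 - sg * sg * (w * cj w)) * (y * cj y)) :> C.
  rewrite rmorphD !rmorphM /= hs; ring.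
rewrite hs2 mul1r.
apply: mulr_ge0; first exact: h_ge0.
by apply: addr_ge0; [exact: mul_conjC_ge0 | apply: mulr_ge0 => //; exact: mul_conjC_ge0].
Qed.

Lemma psdB0 n (k l : 'I_n) (G T : C) : k != l -> cj G = G -> cj T = T -> 0 <= G ->
  psd (blk k l G (G * T) (G * T) (G * (T * T)) 2%:R^-1).
Proof.
move=> kl hG hT G0; apply: psd_blk => //; rewrite ?conj_h ?h_ge0 //.
- by rewrite !rmorphM /= hG hT.
- by rewrite !rmorphM /= hG hT.
move=> x y.
have -> : cj x * (G * x + G * T * y) + cj y * (G * T * x + G * (T * T) * y) =
   G * ((x + T * y) * cj (x + T * y)) :> C.
  by rewrite rmorphD !rmorphM /= hT; ring.
by apply: mulr_ge0 => //; exact: mul_conjC_ge0.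
Qed.

Lemma psdB1 n (k l : 'I_n) (G T : C) : k != l -> cj G = G -> cj T = T -> 0 <= G ->
  psd (blk k l (G * (T * T)) (- (G * T)) (- (G * T)) G 2%:R^-1).
Proof.
move=> kl hG hT G0; apply: psd_blk => //; rewrite ?conj_h ?h_ge0 //.
- by rewrite !rmorphM /= hG hT.
- by rewrite rmorphN !rmorphM /= hG hT.
move=> x y.
have -> : cj x * (G * (T * T) * x + - (G * T) * y) + cj y * (- (G * T) * x + G * y) =
   G * ((T * x - y) * cj (T * x - y)) :> C.
  by rewrite rmorphB !rmorphM /= hT; ring.
by apply: mulr_ge0 => //; exact: mul_conjC_ge0.
Qed.

Lemma psdA0 n (k l : 'I_n) : k != l -> psd (blk k l 1 0 0 0 1).
Proof.
move=> kl; apply: psd_blk => //; rewrite ?conjC0 ?conjC1 ?ler01 //.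
move=> x y; rewrite ?(mul0r, mul1r, mulr0, addr0, add0r) mulrC; exact: mul_conjC_ge0.
Qed.

Lemma psdA1 n (k l : 'I_n) : k != l -> psd (blk k l 0 0 0 1 0).
Proof.
move=> kl; apply: psd_blk => //; rewrite ?conjC0 ?conjC1 //.
move=> x y; rewrite ?(mul0r, mul1r, mulr0, addr0, add0r) mulrC; exact: mul_conjC_ge0.
Qed.

Lemma chsh_pt (u0 u1 v0 v1 : R) : 0 <= u0 <= 1 -> 0 <= u1 <= 1 -> 0 <= v0 <= 1 -> 0 <= v1 <= 1 ->
  (2*u0-1)*(2*v0-1) + (2*u0-1)*(2*v1-1) + (2*u1-1)*(2*v0-1) - (2*u1-1)*(2*v1-1) <= 2.
Proof.
move=> /andP[a0 a1] /andP[b0 b1] /andP[c0 c1] /andP[d0 d1].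
by have [h1|h1] := lerP v1 v0; nra.
Qed.

Definition o0 : 'I_2 := @Ordinal 2 0 isT.
Definition o1 : 'I_2 := @Ordinal 2 1 isT.

Lemma sum2 (V : nmodType) (F : 'I_2 -> V) : \sum_(a < 2) F a = F o0 + F o1.
Proof.
rewrite big_ord_recl big_ord1; congr (F _ + F _); exact: val_inj.
Qed.

Lemma in01 (p : 'I_2 -> R) : (forall a, 0 <= p a) -> \sum_(a < 2) p a = 1 ->
  0 <= p o0 <= 1 /\ p o1 = 1 - p o0.
Proof.
move=> h; rewrite sum2 => e; split; last by rewrite -e addrC addrK.
by rewrite h /= -e lerDl h.
Qed.

Definition Pc L (q : 'I_L -> R) (pA pB : 'I_L -> 'I_2 -> 'I_2 -> R) x y a b :=
  \sum_(l < L) q l * pA l x a * pB l y b.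

Definition Ec L (q : 'I_L -> R) (pA pB : 'I_L -> 'I_2 -> 'I_2 -> R) x y :=
  Pc q pA pB x y o0 o0 - Pc q pA pB x y o0 o1 - Pc q pA pB x y o1 o0 + Pc q pA pB x y o1 o1.

Lemma linE L (F1 F2 F3 F4 : 'I_L -> R) :
  \sum_l F1 l - \sum_l F2 l - \sum_l F3 l + \sum_l F4 l = \sum_l (F1 l - F2 l - F3 l + F4 l).
Proof. by rewrite big_split !sumrB. Qed.

Lemma linS L (F1 F2 F3 F4 : 'I_L -> R) :
  \sum_l F1 l + \sum_l F2 l + \sum_l F3 l - \sum_l F4 l = \sum_l (F1 l + F2 l + F3 l - F4 l).
Proof. by rewrite sumrB !big_split. Qed.

Lemma chsh_bound L (q : 'I_L -> R) (pA pB : 'I_L -> 'I_2 -> 'I_2 -> R) :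
  (forall l, 0 <= q l) -> \sum_(l < L) q l = 1 ->
  (forall l x a, 0 <= pA l x a) -> (forall l x, \sum_(a < 2) pA l x a = 1) ->
  (forall l y b, 0 <= pB l y b) -> (forall l y, \sum_(b < 2) pB l y b = 1) ->
  Ec q pA pB o0 o0 + Ec q pA pB o0 o1 + Ec q pA pB o1 o0 - Ec q pA pB o1 o1 <= 2.
Proof.
move=> q0 q1 a0 a1 b0 b1.
have -> : Ec q pA pB o0 o0 + Ec q pA pB o0 o1 + Ec q pA pB o1 o0 - Ec q pA pB o1 o1 =
  \sum_(l < L) q l * (
    (pA l o0 o0 - pA l o0 o1) * (pB l o0 o0 - pB l o0 o1) +
    (pA l o0 o0 - pA l o0 o1) * (pB l o1 o0 - pB l o1 o1) +
    (pA l o1 o0 - pA l o1 o1) * (pB l o0 o0 - pB l o0 o1) -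
    (pA l o1 o0 - pA l o1 o1) * (pB l o1 o0 - pB l o1 o1)).
  rewrite /Ec /Pc !linE linS.
  by apply: eq_bigr => l _; ring.
apply: (@le_trans _ _ (\sum_(l < L) q l * 2)); last by rewrite -mulr_suml q1 mul1r.
apply: ler_sum => l _; apply: ler_wpM2l => //.
have [u0 e0] := in01 (a0 l o0) (a1 l o0).
have [u1 e1] := in01 (a0 l o1) (a1 l o1).
have [v0 f0] := in01 (b0 l o0) (b1 l o0).
have [v1 f1] := in01 (b0 l o1) (b1 l o1).
rewrite e0 e1 f0 f1.
have := chsh_pt u0 u1 v0 v1.
have E : forall z : R, z - (1 - z) = 2 * z - 1 by move=> z; ring.
rewrite !E; exact.
Qed.

Lemma ccj (c : C) : c * cj c = (complex.Re c ^+ 2 + complex.Im c ^+ 2)%:C.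
Proof. case: c => x y; rewrite /=; simpc; rewrite /=; apply/eqP; rewrite eq_complex /=; apply/andP; split; apply/eqP; ring. Qed.

Lemma cjr (r : R) : cj (r%:C) = r%:C.
Proof. exact: conjc_real. Qed.

Lemma hh : 2%:R^-1 + 2%:R^-1 = 1 :> C.
Proof. by field. Qed.

Definition sgn (a : 'I_2) : C := if a == o0 then 1 else -1.

Definition MA n (k l : 'I_n) (w : C) (x a : 'I_2) : 'M[C]_n :=
  if x == o0 then (if a == o0 then blk k l 1 0 0 0 1 else blk k l 0 0 0 1 0)
  else blk k l 2%:R^-1 (sgn a * (2%:R^-1 * w)) (sgn a * (2%:R^-1 * cj w)) 2%:R^-1 2%:R^-1.

Definition Tp (T : C) (y : 'I_2) := if y == o0 then T else - T.

Definition MB n (k l : 'I_n) (G T : C) (y b : 'I_2) : 'M[C]_n :=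
  if b == o0 then blk k l G (G * Tp T y) (G * Tp T y) (G * (Tp T y * Tp T y)) 2%:R^-1
  else blk k l (G * (Tp T y * Tp T y)) (- (G * Tp T y)) (- (G * Tp T y)) G 2%:R^-1.

Lemma povmA n (k l : 'I_n) w x : k != l -> 0 <= 1 - w * cj w -> povm (MA k l w x).
Proof.
move=> kl hw; split.
  move=> a; rewrite /MA; case: ifP => _; first by case: ifP => _; [exact: psdA0 | exact: psdA1].
  apply: psdA => //; rewrite /sgn; case: ifP => _; rewrite ?rmorph1 ?rmorphN /= ?rmorph1 ?mulr1 ?mulrNN ?mulr1 //.
rewrite sum2 /MA; case: ifP => _; rewrite /= blk_add -(blk1 kl).
  by rewrite !addr0 !add0r.
rewrite /sgn /= hh; congr blk; ring.
Qed.

Lemma povmB n (k l : 'I_n) G T y : k != l -> cj G = G -> cj T = T -> 0 <= G ->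
  G * (1 + T * T) = 1 -> povm (MB k l G T y).
Proof.
move=> kl hG hT G0 GT.
have hT' : cj (Tp T y) = Tp T y by rewrite /Tp; case: ifP => _; rewrite ?rmorphN /= hT.
have TT : Tp T y * Tp T y = T * T by rewrite /Tp; case: ifP => _; rewrite ?mulrNN.
split.
  by move=> b; rewrite /MB; case: ifP => _; [exact: psdB0 | exact: psdB1].
rewrite sum2 /MB /= blk_add -(blk1 kl) hh TT; congr blk.
- by rewrite -GT; ring.
- by ring.
- by ring.
- by rewrite -GT; ring.
Qed.

Lemma bkk n (k l : 'I_n) (kl : k != l) p q r s e : blk k l p q r s e k k = p.
Proof. by case: (blkE p q r s e kl). Qed.
Lemma bkl n (k l : 'I_n) (kl : k != l) p q r s e : blk k l p q r s e k l = q.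
Proof. by case: (blkE p q r s e kl). Qed.
Lemma blk' n (k l : 'I_n) (kl : k != l) p q r s e : blk k l p q r s e l k = r.
Proof. by case: (blkE p q r s e kl). Qed.
Lemma bll n (k l : 'I_n) (kl : k != l) p q r s e : blk k l p q r s e l l = s.
Proof. by case: (blkE p q r s e kl). Qed.

Lemma nonlocal n (rho : 'M[C]_n.+1) (k l : 'I_n.+1) : is_state rho -> k != l ->
  rho k k + rho l l = 1 -> rho k l != 0 ->
  bell_nonlocal (apply_kraus (KR n) (rho *t ket0bra R n.+1)).
Proof.
move=> st kl e cnz.
have c'E : rho l k = cj (rho k l) := psd_herm k l (proj1 st).
rewrite (rho_blk st kl e) out_blk // c'E.
move: e cnz; set a := rho k k; set b := rho l l; set c := rho k l => e cnz.
have bE : b = 1 - a by rewrite -e; ring.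
set nn := complex.Re c ^+ 2 + complex.Im c ^+ 2.
have cc : c * cj c = nn%:C := ccj c.
have nn0 : 0 < nn.
  rewrite lt_def; apply/andP; split; last by rewrite addr_ge0 ?sqr_ge0.
  apply/eqP => h; move: cc; rewrite h rmorph0 => /eqP; rewrite mulf_eq0 conjC_eq0 orbb.
  by rewrite (negbTE cnz).
set s := (1 + nn)^-1.
have s0 : 0 < s by rewrite invr_gt0; lra.
set t := nn * s.
have t0 : 0 < t by rewrite mulr_gt0.
set g := (1 + t ^+ 2)^-1.
have p1 : 0 < 1 + t ^+ 2 by have := sqr_ge0 t; lra.
have g0 : 0 < g by rewrite invr_gt0.
set w := c * s%:C.
have wE : cj w = cj c * s%:C by rewrite /w rmorphM /= cjr.
move=> H.
have [] := H 2 2 2 2 (MA k l w) (MB k l g%:C t%:C).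
- move=> x; apply: povmA => //.
  have -> : 1 - w * cj w = (1 - nn * (s * s))%:C.
    by rewrite wE /w mulrACA cc rmorphB rmorph1 !rmorphM.
  have -> : 1 - nn * (s * s) = s * s * (1 + nn + nn ^+ 2).
    by rewrite /s; field; apply: lt0r_neq0; lra.
  rewrite ler0c; apply: mulr_ge0; first by rewrite mulr_ge0 // ltW.
  by have := sqr_ge0 nn; lra.
- move=> y; apply: povmB => //; rewrite ?cjr ?ler0c ?(ltW g0) //.
  by rewrite -rmorphM -rmorphD -rmorphM /g -expr2 mulVf // gt_eqF.
move=> L [q [pA [pB [[q0 q1] [a0 a1] [b0 b1] eqn]]]].
have bound := chsh_bound q0 q1 a0 a1 b0 b1.
have eqn' : forall x y a b, (Pc q pA pB x y a b)%:C =
   rho k k * (MA k l w x a k k * MB k l g%:C t%:C y b k k) +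
   c * (MA k l w x a l k * MB k l g%:C t%:C y b l k) +
   cj c * (MA k l w x a k l * MB k l g%:C t%:C y b k l) +
   rho l l * (MA k l w x a l l * MB k l g%:C t%:C y b l l).
  by move=> x y a' b'; rewrite /Pc -eqn tr_out.
have HZ : 2%:R * g%:C * (1 - t%:C * t%:C) + 8%:R * g%:C * t%:C * (c * cj c * s%:C)
    = (2 + 4 * g * t ^+ 2)%:C.
  have -> : 2 + 4 * g * t ^+ 2 = 2%:R * g * (1 - t * t) + 8%:R * g * t * (nn * s).
    by rewrite -/t /g; field; apply: lt0r_neq0.
  rewrite cc !(rmorphD, rmorphB, rmorphN, rmorphM, rmorph1, rmorph_nat) /=.
  ring.
have HS : (Ec q pA pB o0 o0 + Ec q pA pB o0 o1 + Ec q pA pB o1 o0 - Ec q pA pB o1 o1)%:C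
   = 2%:R * g%:C * (1 - t%:C * t%:C) + 8%:R * g%:C * t%:C * (c * cj c * s%:C).
  rewrite /Ec !(rmorphD, rmorphN, rmorphB) /= !eqn' /MA /MB /Tp /sgn /=.
  rewrite !(bkk kl) !(bkl kl) !(blk' kl) !(bll kl).
  have bE' : rho l l = 1 - rho k k by exact: bE.
  rewrite bE' wE /w.
  by field.
rewrite HZ in HS.
move: bound; rewrite (complexI HS).
have : 0 < 4 * g * t ^+ 2 by rewrite !mulr_gt0 // exprn_gt0.
lra.
Qed.

Lemma ReD (x y : C) : complex.Re (x + y) = complex.Re x + complex.Re y.
Proof. by case: x; case: y. Qed.
Lemma Re0 : complex.Re (0 : C) = 0. Proof. by []. Qed.
Lemma Re1 : complex.Re (1 : C) = 1. Proof. by []. Qed.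
Lemma Re_sum m (F : 'I_m -> C) : complex.Re (\sum_j F j) = \sum_j complex.Re (F j).
Proof. exact: (big_morph _ ReD Re0). Qed.
Lemma re_ge0 (z : C) : 0 <= z -> 0 <= complex.Re z.
Proof. by case: z => x y; rewrite lecE /= => /andP [_ ->]. Qed.
Lemma re_eq (z : C) : 0 <= z -> z = (complex.Re z)%:C.
Proof. by case: z => x y; rewrite lecE /= => /andP [/eqP -> _]. Qed.

Lemma psd_diagmx n (D : 'M[C]_n) : is_diag_mx D -> (forall i, 0 <= D i i) -> psd D.
Proof.
move=> /is_diag_mxP dg h; split.
  apply/matrixP=> i j; rewrite !mxE.
  case: (eqVneq i j) => [<-|ij].
    by have := ger0_real (h i); rewrite CrealE => /eqP ->.
  by rewrite !dg ?conjC0 // ?(eq_sym j) ?(inj_eq val_inj) // eq_sym.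
move=> v; rewrite -mulmxA mxE; apply: sumr_ge0 => i _.
rewrite [(D *m v) i 0]mxE (bigD1 i) //= big1 ?addr0; last first.
  by move=> j ji; rewrite dg ?mul0r // eq_sym.
rewrite !mxE mulrCA; apply: mulr_ge0 => //; rewrite mulrC; exact: mul_conjC_ge0.
Qed.

Lemma tr_mul_diag n (D Y : 'M[C]_n) : is_diag_mx D -> \tr (D *m Y) = \sum_i D i i * Y i i.
Proof.
move=> /is_diag_mxP dg; apply: eq_bigr => i _.
rewrite mxE (bigD1 i) //= big1 ?addr0 // => j ji; rewrite dg ?mul0r //.
by rewrite eq_sym.
Qed.

Lemma diag_local dA dB (D : 'M[C]_(dA * dB)) : is_diag_mx D -> psd D -> \tr D = 1 -> bell_local D.
Proof.
move=> dg pD tD mA mB oA oB MA MB hA hB.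
exists (dA * dB), (fun I => complex.Re (D I I)),
  (fun I x a => complex.Re (MA x a (mxtens_unindex I).1 (mxtens_unindex I).1)),
  (fun I y b => complex.Re (MB y b (mxtens_unindex I).2 (mxtens_unindex I).2)).
split.
- split; first by move=> I; apply: re_ge0; exact: psd_diag_ge0.
  by rewrite -Re_sum; change (complex.Re (\tr D) = 1); rewrite tD.
- split; first by move=> I x a; apply: re_ge0; apply: psd_diag_ge0; exact: ((hA x).1 a).
  by move=> I x; rewrite -Re_sum -summxE (hA x).2 mxE eqxx.
- split; first by move=> I y b; apply: re_ge0; apply: psd_diag_ge0; exact: ((hB y).1 b).
  by move=> I y; rewrite -Re_sum -summxE (hB y).2 mxE eqxx.
move=> x y a b; rewrite tr_mul_diag // rmorph_sum; apply: eq_bigr => I _.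
have e1 := re_eq (psd_diag_ge0 I pD).
have e2 := re_eq (psd_diag_ge0 (mxtens_unindex I).1 ((hA x).1 a)).
have e3 := re_eq (psd_diag_ge0 (mxtens_unindex I).2 ((hB y).1 b)).
by rewrite !rmorphM /= -e1 -e2 -e3 mxE mulrA.
Qed.

Lemma diag_sum n m (F : 'I_m -> 'M[C]_n) : (forall j, is_diag_mx (F j)) -> is_diag_mx (\sum_j F j).
Proof.
move=> h; apply/is_diag_mxP => a b ab; rewrite summxE big1 // => j _.
by move/is_diag_mxP: (h j) => ->.
Qed.

Lemma ket0_tr n : \tr (ket0bra R n.+1) = 1.
Proof.
rewrite /mxtrace (bigD1 ord0) //= big1 ?addr0; first by rewrite mxE.
by move=> j j0; rewrite mxE; case: j j0 => [[|j] ?] //=.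
Qed.

Lemma input_incoh n p (rho : 'M[C]_n) : is_state rho -> is_diag_mx rho ->
  incoherent_state (rho *t ket0bra R p.+1).
Proof.
move=> [pr tr] /is_diag_mxP dg.
have dX : is_diag_mx (rho *t ket0bra R p.+1).
  apply/is_diag_mxP => I J; case: (mxtens_indexP I) => i1 i2; case: (mxtens_indexP J) => j1 j2.
  rewrite tensmxE => ne; case: (eqVneq i1 j1) => [e1|ne1]; last by rewrite dg ?mul0r.
  rewrite mxE; case: (eqVneq (nat_of_ord i2) 0%N) => [h2|]; last by rewrite /= mulr0.
  case: (eqVneq (nat_of_ord j2) 0%N) => [h3|]; last by rewrite andbF mulr0.
  exfalso; move: ne; rewrite e1.
  have -> : i2 = j2 by apply: val_inj; rewrite /= h2 h3.
  by rewrite eqxx.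
split=> //; split.
  apply: psd_diagmx => // I; rewrite mxE; apply: mulr_ge0; first exact: psd_diag_ge0.
  by rewrite mxE ler0n.
rewrite /mxtrace; under eq_bigr => I _ do rewrite mxE.
rewrite -(mulr_sum (fun i => rho i i) (fun j => ket0bra R p.+1 j j)).
by have := ket0_tr p; rewrite /mxtrace => ->; rewrite mulr1.
Qed.

Lemma local_of_diag n m (rho : 'M[C]_n.+1) (K : 'I_m -> 'M[C]_(n.+1 * n.+1)) :
  is_state rho -> is_diag_mx rho -> incoherent_operation K ->
  bell_local (apply_kraus K (rho *t ket0bra R n.+1)).
Proof.
move=> st dg [sK hK].
have [[pX tX] dX] := input_incoh n st dg.
apply: diag_local.
- by apply: diag_sum => j; apply: hK; split.
- by apply: psd_sum => j; apply: psd_conj.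
rewrite /apply_kraus raddf_sum /=.
under eq_bigr => j _ do rewrite mxtrace_mulC mulmxA.
by rewrite -raddf_sum /= -mulmx_suml sK mul1mx tX.
Qed.

Lemma blk_diag n (k l : 'I_n) p s : k != l -> is_diag_mx (blk k l p 0 0 s 0).
Proof.
move=> kl; apply/is_diag_mxP => i j ij; rewrite mxE.
have ij' : i != j by apply: contra ij => /eqP ->.
case: (eqVneq i k) => [?|ik]; [subst i|].
  by rewrite ?(eq_sym j) ?(negbTE ij'); case: ifP.
case: (eqVneq i l) => [?|il]; [subst i|].
  by rewrite ?(negbTE ik) ?(eq_sym j) ?(negbTE ij'); case: ifP.
by case: ifP.
Qed.

End Main.

Unset Implicit Arguments.
Set Strict Implicit.

Theorem mainTheorem3 (R : realType) (d : nat) (rho : 'M[R[i]]_d) :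
  (2 <= d)%N ->
  is_state rho ->
  \rank rho = 2%N ->
  (exists k l : 'I_d,
      [/\ k != l, 0 < rho k k, 0 < rho l l & rho k k + rho l l = 1]) ->
  ((exists (m : nat) (K : 'I_m -> 'M[R[i]]_(d * d)),
       incoherent_operation K /\
       bell_nonlocal (apply_kraus K (rho *t ket0bra R d)))
   <-> coherent rho).
Proof.
case: d rho => [|n] rho //.
move=> _ st _ [k [l [kl _ _ e]]].
split.
  move=> [m [K [inc nl]]]; apply/negP => dg; apply: nl.
  exact: local_of_diag.
move=> coh; exists 1%N, (KR R n); split; first exact: KR_incoh.
apply: (nonlocal st kl e).
apply/eqP => c0; move/negP: coh; apply.
rewrite (rho_blk st kl e) (psd_herm k l (proj1 st)) c0 conjC0.
exact: blk_diag.
Qed.
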